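(* Every pairwise social choice correspondence that satisfies set non-imposition, homogeneity, and strategyproofness is strongly Condorcet-consistent.
   Context: Let $A$ be a finite set of alternatives; a preference profile $R$ assigns a strict total order $\succ_i$ on $A$ to each voter $i$ of a finite non-empty electorate $N\subseteq\{1,2,\dots\}$; $\mathcal{R}^*(A)$ is the set of all profiles over all electorates. $g_R(x,y)=|\{i: x\succ_i y\}|-|\{i: y\succ_i x\}|$; $x\succ_R y$ iff $g_R(x,y)>0$. A Condorcet winner is $x$ with $x\succ_R y$ for all $y\ne x$. An SCC is $f:\mathcal{R}^*(A)\to 2^A\setminus\{\emptyset\}$; pairwise: $f(R)=f(R')$ whenever $g_R=g_{R'}$; set non-imposing: for every non-empty $X\subseteq A$ some profile has $f(R)=X$; homogeneous: $f(kR)=f(R)$ for $k$ copies $kR$ of $R$; strongly Condorcet-consistent: $f(R)=\{x\}$ iff $x$ is the Condorcet winner in $R$. Fishburn's extension: for $X\ne Y$, $X\succ_i^F Y$ iff $x\succ_i y$ for all $x\in X\setminus Y,y\in Y$ and for all $x\in X,y\in Y\setminus X$; $f$ is strategyproof if no voter $i$ can change only his own preference to move from $R$ to $R'$ with $f(R')\succ_i^F f(R)$. *)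

(* Defs.v *)
From mathcomp Require Import all_boot all_order all_algebra.
Set Implicit Arguments. Unset Strict Implicit. Unset Printing Implicit Defensive.

Definition strict_total_order (A : finType) (r : rel A) : Prop :=
  [/\ (forall x, ~~ r x x),
      (forall x y z, r x y -> r y z -> r x z) &
      (forall x y, x != y -> r x y || r y x)].

(* Raw profile data: the electorate (listed increasingly) and each voter's
   preference relation ([pref i x y] means x >_i y). *)
Record profile (A : finType) := Profile {
  voters : seq nat;
  pref : nat -> rel A
}.

(* A genuine preference profile: a finite non-empty electorate N of positive
   integers (represented canonically as a strictly increasing list), a strict
   total order for each voter of N, and (canonical normalisation) the empty
   relation for non-voters. *)
Definition valid_profile (A : finType) (R : profile A) : Prop :=
  [/\ sorted ltn (voters R),
      voters R != [::],
      0 \notin voters R,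
      (forall i, i \in voters R -> strict_total_order (pref R i)) &
      (forall i, i \notin voters R -> forall x y, pref R i x y = false)].

Definition margin (A : finType) (R : profile A) (x y : A) : int :=
  (count (fun i => pref R i x y) (voters R))%:Z
  - (count (fun i => pref R i y x) (voters R))%:Z.

Definition majority_pref (A : finType) (R : profile A) (x y : A) : Prop :=
  (0 < margin R x y)%R.

Definition condorcet_winner (A : finType) (R : profile A) (x : A) : Prop :=
  forall y, y != x -> majority_pref R x y.

(* k copies of R: with m = max N, voters 1..k*m, voter v being a copy of the
   original voter ((v-1) mod m) + 1 whenever that voter belongs to N. *)
Definition orig_voter (m v : nat) : nat := ((v.-1) %% m).+1.

Definition copies (A : finType) (k : nat) (R : profile A) : profile A :=
  let m := \max_(i <- voters R) i in
  let N' := [seq v <- iota 1 (k * m) | orig_voter m v \in voters R] in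
  Profile N' (fun v x y => (v \in N') && pref R (orig_voter m v) x y).

Definition fishburn (A : finType) (r : rel A) (X Y : {set A}) : Prop :=
  [/\ X != Y,
      (forall x y, x \in X :\: Y -> y \in Y -> r x y) &
      (forall x y, x \in X -> y \in Y :\: X -> r x y)].

(* Social choice correspondences: values on genuine profiles are non-empty;
   values on non-profiles are irrelevant. *)
Definition is_SCC (A : finType) (f : profile A -> {set A}) : Prop :=
  forall R, valid_profile R -> f R != set0.

Definition pairwise_SCC (A : finType) (f : profile A -> {set A}) : Prop :=
  forall R R', valid_profile R -> valid_profile R' ->
    (forall x y, margin R x y = margin R' x y) -> f R = f R'.

Definition set_non_imposing (A : finType) (f : profile A -> {set A}) : Prop :=
  forall X : {set A}, X != set0 -> exists R, valid_profile R /\ f R = X.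

Definition homogeneous (A : finType) (f : profile A -> {set A}) : Prop :=
  forall R k, valid_profile R -> 0 < k -> f (copies k R) = f R.

Definition strategyproof (A : finType) (f : profile A -> {set A}) : Prop :=
  forall R R' i, valid_profile R -> valid_profile R' ->
    voters R' = voters R -> i \in voters R ->
    (forall j, j != i -> pref R' j = pref R j) ->
    ~ fishburn (pref R i) (f R') (f R).

Definition strongly_condorcet_consistent (A : finType)
    (f : profile A -> {set A}) : Prop :=
  forall R, valid_profile R ->
    forall x, f R = [set x] <-> condorcet_winner R x.

(* Main.v *)
Require Import Defs.
From mathcomp Require Import all_boot all_order all_algebra zify ring.
Import GRing.Theory Num.Theory Order.TTheory.
Set Implicit Arguments. Unset Strict Implicit. Unset Printing Implicit Defensive.

Definition rk (A : finType) (a b t : A) (u : A) : nat :=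
  if u == a then 0 else if u == b then 1 else if u == t then #|A|.+2
  else (enum_rank u).+2.

Definition rrel (A : finType) (a b t : A) : rel A :=
  fun u v => rk a b t u < rk a b t v.

Definition oprel (A : finType) (r : rel A) : rel A := fun u v => r v u.

Lemma rk_ge2 (A : finType) (a b t w : A) : w != a -> w != b -> 1 < rk a b t w.
Proof. by rewrite /rk => /negbTE -> /negbTE ->; case: ifP. Qed.

Lemma rk_lt (A : finType) (a b t w : A) : w != t -> rk a b t w < #|A|.+2.
Proof.
rewrite /rk => /negbTE ->; case: ifP => // _; case: ifP => // _.
by rewrite !ltnS; exact (ltn_ord _).
Qed.

Lemma rk_inj (A : finType) (a b t : A) : a != b -> injective (rk a b t).
Proof.
move=> ab u v; rewrite /rk.
have H (w : A) : (enum_rank w).+2 < #|A|.+2 by rewrite !ltnS; exact (ltn_ord _).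
have e1 : forall n m : nat, n.+2 = m.+2 -> n = m by move=> n m [].
case: ifP => [/eqP->|?]; [|case: ifP => [/eqP->|?]; [|case: ifP => [/eqP->|?]]];
case: ifP => [/eqP->|?]; try (case: ifP => [/eqP->|?]); try (case: ifP => [/eqP->|?]);
try done; try (move=> E; lia); try (have := H u; lia); try (have := H v; lia).
all: by move/e1/val_inj/enum_rank_inj.
Qed.

Lemma sto_rrel (A : finType) (a b t : A) : a != b -> strict_total_order (rrel a b t).
Proof.
move=> ab; split.
- by move=> u; rewrite /rrel ltnn.
- by move=> u v w; rewrite /rrel; apply: ltn_trans.
- move=> u v uv; rewrite /rrel -neq_ltn; apply/eqP => /(rk_inj ab) E.
  by rewrite E eqxx in uv.
Qed.

Lemma sto_op (A : finType) (r : rel A) : strict_total_order r -> strict_total_order (oprel r).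
Proof.
case=> H1 H2 H3; split => //.
- by move=> u v w; rewrite /oprel => h1 h2; apply: H2 h2 h1.
- by move=> u v uv; rewrite /oprel orbC; apply: H3.
Qed.

Lemma sto_ext (A : finType) (r r' : rel A) : r =2 r' -> strict_total_order r -> strict_total_order r'.
Proof.
move=> E [H1 H2 H3]; split.
- by move=> u; rewrite -E.
- by move=> u v w; rewrite -!E; apply: H2.
- by move=> u v uv; rewrite -!E; apply: H3.
Qed.

Definition contrib (A : finType) (r : rel A) (u v : A) : int :=
  ((r u v : nat)%:Z - (r v u : nat)%:Z)%R.

Definition dlt (A : finType) (a b u v : A) : int :=
  (((u == a) && (v == b) : nat)%:Z - ((u == b) && (v == a) : nat)%:Z)%R.

Lemma contrib_op (A : finType) (r : rel A) u v : contrib (oprel r) u v = (- contrib r u v)%R.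
Proof. by rewrite /contrib /oprel opprB. Qed.

Lemma rkA (A : finType) (a b t : A) : rk a b t a = 0.
Proof. by rewrite /rk eqxx. Qed.
Lemma rkB (A : finType) (a b t : A) : a != b -> rk a b t b = 1.
Proof. by rewrite /rk eq_sym => /negbTE ->; rewrite eqxx. Qed.
Lemma rkO (A : finType) (a b t w : A) : w != a -> w != b -> rk a b t w = rk b a t w.
Proof. by rewrite /rk => /negbTE -> /negbTE ->. Qed.

Lemma contrib_swap (A : finType) (a b t : A) u v : a != b ->
  contrib (rrel a b t) u v = (contrib (rrel b a t) u v + 2%:Z * dlt a b u v)%R.
Proof.
move=> ab; have ba : b != a by rewrite eq_sym.
rewrite /contrib /rrel /dlt.
have [->|ua] := eqVneq u a.
  have [->|va] := eqVneq v a; first by rewrite !ltnn ?eqxx ?(negbTE ab).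
  have [->|vb] := eqVneq v b.
    by rewrite !rkA !rkB // ?eqxx ?(negbTE ab) ?(negbTE ba).
  rewrite !rkA !rkB // -(rkO t vb va) ?eqxx ?(negbTE va) ?(negbTE vb) ?(negbTE ab) /=.
  by have := rk_ge2 t vb va; case: (rk b a t v) => [|[|n]] //=.
have [->|ub] := eqVneq u b.
  have [->|va] := eqVneq v a.
    by rewrite !rkA !rkB // ?eqxx ?(negbTE ab) ?(negbTE ba).
  have [->|vb] := eqVneq v b; first by rewrite !ltnn ?eqxx ?(negbTE ba) ?andbF.
  rewrite !rkA !rkB // -(rkO t va vb) ?eqxx ?(negbTE va) ?(negbTE vb) ?(negbTE ba) /=.
  by have := rk_ge2 t va vb; case: (rk a b t v) => [|[|n]] //=.
rewrite ?(negbTE ua) ?(negbTE ub) /= -(rkO t ua ub).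
have := rk_ge2 t ua ub; case: (rk a b t u) => [|[|n]] //= _.
have [->|va] := eqVneq v a; first by rewrite !rkA !rkB.
have [->|vb] := eqVneq v b; first by rewrite !rkA !rkB.
by rewrite -(rkO t va vb) /= addr0.
Qed.
Definition maxv (A : finType) (P : profile A) := \max_(i <- voters P) i.

Definition ext (A : finType) (P : profile A) (r1 r2 : rel A) : profile A :=
  Profile (voters P ++ [:: (maxv P).+1; (maxv P).+2])
          (fun i => if i == (maxv P).+1 then r1 else if i == (maxv P).+2 then r2 else pref P i).

Lemma le_maxv (A : finType) (P : profile A) i : i \in voters P -> i <= maxv P.
Proof. by move=> H; rewrite /maxv; apply: (@leq_bigmax_seq _ _ xpredT id). Qed.

Lemma valid_ext (A : finType) (P : profile A) r1 r2 :
  valid_profile P -> strict_total_order r1 -> strict_total_order r2 -> valid_profile (ext P r1 r2).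
Proof.
case=> [Hs Hn H0 Hsto Hnv] s1 s2; split => /=.
- rewrite (sorted_pairwise ltn_trans) pairwise_cat -(sorted_pairwise ltn_trans) Hs /= !andbT.
  rewrite ltnSn andbT; apply/allrelP => i j Hi; rewrite !inE => /orP[]/eqP->.
    by rewrite ltnS le_maxv.
  by rewrite ltnS ltnW // ltnS le_maxv.
- by case: (voters P).
- by rewrite mem_cat negb_or H0 !inE.
- move=> i; rewrite mem_cat !inE.
  have [_|n1] := eqVneq i (maxv P).+1; first by [].
  have [_|n2] := eqVneq i (maxv P).+2; first by [].
  by rewrite !orbF; apply: Hsto.
- move=> i; rewrite mem_cat !inE negb_or negb_or => /and3P[Hi /negbTE -> /negbTE ->].
  by apply: Hnv.
Qed.

Lemma margin_ext (A : finType) (P : profile A) r1 r2 u v :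
  margin (ext P r1 r2) u v = (margin P u v + contrib r1 u v + contrib r2 u v)%R.
Proof.
rewrite /margin /contrib /= !count_cat /=.
have h1 : ((maxv P).+2 == (maxv P).+1) = false by rewrite gtn_eqF.
rewrite eqxx h1 eqxx.
have E : forall x y, count (fun i => (if i == (maxv P).+1 then r1 else if i == (maxv P).+2 then r2 else pref P i) x y) (voters P)
   = count (fun i => pref P i x y) (voters P).
  move=> x y; apply: eq_in_count => i /le_maxv Hi.
  by rewrite ltn_eqF ?ltnS // ltn_eqF // ltnS ltnW.
rewrite !E !PoszD; set c1 := (count _ _ : int); set c2 := (count _ _ : int).
lia.
Qed.

Lemma count_iota_orig k m (N : seq nat) (P : pred nat) :
  (forall i, i \in N -> 0 < i <= m) -> uniq N -> (forall i, i \notin N -> P i = false) ->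
  count (fun v => P (orig_voter m v)) (iota 1 (k * m)) = k * count P N.
Proof.
move=> HN uN HP.
have base : count P (iota 1 m) = count P N.
  have -> : count P (iota 1 m) = count P [seq i <- iota 1 m | i \in N].
    rewrite count_filter; apply: eq_count => i /=.
    by case: (boolP (i \in N)) => Hi; rewrite ?andbT ?andbF // HP.
  apply/permP; apply: uniq_perm; first by rewrite filter_uniq // iota_uniq.
    done.
  move=> i; rewrite mem_filter mem_iota; case: (boolP (i \in N)) => //= /HN.
  by move=> /andP[h1 h2]; rewrite h1 /=; lia.
elim: k => [|k IH]; first by rewrite mul0n.
rewrite mulSnr iotaD count_cat IH (addnC 1 (k * m)) iotaDl count_map [in RHS]mulSnr.
congr (_ + _); rewrite -base.
apply: eq_in_count => s; rewrite mem_iota => /andP[h1 h2] /=.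
suff -> : orig_voter m (k * m + s) = s by [].
rewrite /orig_voter.
have -> : (k * m + s).-1 = k * m + s.-1 by lia.
rewrite modnMDl modn_small; lia.
Qed.

Lemma valid_in (A : finType) (R : profile A) i :
  valid_profile R -> i \in voters R -> 0 < i <= maxv R.
Proof.
case=> _ _ H0 _ _ Hi; rewrite le_maxv // andbT lt0n.
by apply: contraNneq H0 => <-.
Qed.

Lemma valid_uniq (A : finType) (R : profile A) : valid_profile R -> uniq (voters R).
Proof. by case=> Hs _ _ _ _; apply: sorted_uniq Hs; [apply: ltn_trans | apply: ltnn]. Qed.

Lemma margin_copies (A : finType) k (R : profile A) u v :
  valid_profile R -> margin (copies k R) u v = (k%:Z * margin R u v)%R.
Proof.
move=> HR; have HR' := HR; case: HR' => _ _ _ _ Hnv.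
rewrite /margin /copies -/(maxv R) /=.
have E : forall x y, count (fun i => (i \in [seq v <- iota 1 (k * maxv R) | orig_voter (maxv R) v \in voters R])
          && pref R (orig_voter (maxv R) i) x y) [seq v <- iota 1 (k * maxv R) | orig_voter (maxv R) v \in voters R]
        = k * count (fun i => pref R i x y) (voters R).
  move=> x y; rewrite (eq_in_count (a2 := fun i => pref R (orig_voter (maxv R) i) x y)); last first.
    by move=> i ->.
  rewrite count_filter.
  transitivity (count (fun i => pref R (orig_voter (maxv R) i) x y) (iota 1 (k * maxv R))).
    apply: eq_count => i /=; case: (boolP (orig_voter (maxv R) i \in voters R)) => Hi;
    by rewrite ?andbT ?andbF // Hnv.
  apply: count_iota_orig.
  - by move=> i; apply: valid_in.
  - exact: valid_uniq.
  - by move=> i /Hnv ->.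
rewrite !E !PoszM; lia.
Qed.

Lemma valid_copies (A : finType) k (R : profile A) :
  valid_profile R -> 0 < k -> valid_profile (copies k R).
Proof.
move=> HR k0; have HR' := HR; case: HR' => Hs Hn H0 Hsto Hnv.
rewrite /copies -/(maxv R); split => /=.
- by apply: sorted_filter; [apply: ltn_trans | apply: iota_ltn_sorted].
- have [i0 Hi0] : exists i0, i0 \in voters R.
    by move: Hn; case: (voters R) => [//|i0 s] _; exists i0; rewrite inE eqxx.
  have /andP[h1 h2] := valid_in HR Hi0.
  have Ho : orig_voter (maxv R) i0 = i0.
    by rewrite /orig_voter modn_small; lia.
  apply/eqP => E'.
  have : i0 \in [seq v <- iota 1 (k * maxv R) | orig_voter (maxv R) v \in voters R].
    rewrite mem_filter Ho Hi0 mem_iota /=.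
    have := leq_pmull (maxv R) k0; lia.
  by rewrite E'.
- by rewrite mem_filter mem_iota andbF.
- move=> i Hi; apply: (@sto_ext _ (pref R (orig_voter (maxv R) i))).
    by move=> x y; rewrite Hi.
  by apply: Hsto; move: Hi; rewrite mem_filter => /andP[].
- by move=> i /negbTE -> x y.
Qed.

Lemma rk_pos (A : finType) (a b t w : A) : w != a -> 0 < rk a b t w.
Proof. by rewrite /rk => /negbTE ->; case: ifP => //; case: ifP. Qed.

Lemma rk_t (A : finType) (a b t : A) : t != a -> t != b -> rk a b t t = #|A|.+2.
Proof. by rewrite /rk => /negbTE -> /negbTE ->; rewrite eqxx. Qed.

Lemma top_fish (A : finType) (r : rel A) (x : A) (Y : {set A}) :
  (forall v, v != x -> r x v) -> Y != [set x] -> fishburn r [set x] Y.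
Proof.
move=> H hY; split; first by rewrite eq_sym.
- move=> u v; rewrite in_setD in_set1 => /andP[xY /eqP Eu] vY; subst u; apply: H.
  by apply: contraNneq xY => <-.
- move=> u v; rewrite in_set1 in_setD in_set1 => /eqP -> /andP[vx _]; exact: H.
Qed.

Lemma bot_fish (A : finType) (r : rel A) (x : A) (Y : {set A}) :
  (forall u, u != x -> r u x) -> Y != [set x] -> fishburn r Y [set x].
Proof.
move=> H hY; split => //.
- move=> u v; rewrite in_setD in_set1 => /andP[ux _]; rewrite in_set1 => /eqP ->; exact: H.
- move=> u v uY; rewrite in_setD in_set1 => /andP[xY /eqP Ev]; subst v; apply: H.
  by apply: contraNneq xY => <-.
Qed.

Lemma step (A : finType) (f : profile A -> {set A}) (x a b : A) :
  pairwise_SCC f -> strategyproof f -> a != b -> b != x ->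
  forall P, valid_profile P -> f P = [set x] ->
  exists P1, [/\ valid_profile P1, f P1 = [set x] &
    forall u v, margin P1 u v = (margin P u v + 2%:Z * dlt a b u v)%R].
Proof.
move=> hpw hsp ab bx P hP hf.
have [ax|ax] := eqVneq a x.
  subst a.
  have sr := sto_rrel x bx.
  have xb : x != b by rewrite eq_sym.
  set P0 := ext P (rrel b x x) (oprel (rrel b x x)).
  set P1 := ext P (rrel x b x) (oprel (rrel b x x)).
  have v0 : valid_profile P0 by apply: valid_ext => //; apply: sto_op.
  have v1 : valid_profile P1 by apply: valid_ext => //; [apply: sto_rrel | apply: sto_op].
  have f0 : f P0 = [set x].
    rewrite -hf; apply: hpw => // u v.
    by rewrite margin_ext contrib_op; lia.
  exists P1; split => //.
  - apply/eqP; apply/negPn/negP => hne.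
    have Hin : (maxv P).+1 \in voters P1 by rewrite /= mem_cat !inE eqxx orbT.
    have Hj : forall j, j != (maxv P).+1 -> pref P0 j = pref P1 j.
      by move=> j hj /=; rewrite (negbTE hj).
    apply: (hsp P1 P0 (maxv P).+1 v1 v0 erefl Hin Hj).
    rewrite f0; have -> : pref P1 (maxv P).+1 = rrel x b x by rewrite /= eqxx.
    apply: top_fish => // w wx; rewrite /rrel rkA; exact: rk_pos.
  - move=> u v; rewrite margin_ext contrib_op (contrib_swap _ _ _ xb); lia.
have sr := sto_rrel x bx.
have ba : b != a by rewrite eq_sym.
set P0 := ext P (oprel (rrel b a x)) (rrel b a x).
set P1 := ext P (oprel (rrel b a x)) (rrel a b x).
have v0 : valid_profile P0 by apply: valid_ext => //; [apply: sto_op|]; apply: sto_rrel.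
have v1 : valid_profile P1 by apply: valid_ext => //; [apply: sto_op|]; apply: sto_rrel.
have f0 : f P0 = [set x].
  rewrite -hf; apply: hpw => // u v.
  by rewrite margin_ext contrib_op; lia.
exists P1; split => //.
- apply/eqP; apply/negPn/negP => hne.
  have Hin : (maxv P).+2 \in voters P0 by rewrite /= mem_cat !inE eqxx !orbT.
  have Hj : forall j, j != (maxv P).+2 -> pref P1 j = pref P0 j.
    by move=> j hj /=; case: ifP => //; rewrite (negbTE hj).
  apply: (hsp P0 P1 (maxv P).+2 v0 v1 erefl Hin Hj).
  rewrite f0; have -> : pref P0 (maxv P).+2 = rrel b a x by rewrite /= gtn_eqF // eqxx.
  apply: bot_fish => // w wx; rewrite /rrel rk_t; first exact: rk_lt.
    by rewrite eq_sym.
  by rewrite eq_sym.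
- move=> u v; rewrite margin_ext contrib_op (contrib_swap _ _ _ ab); lia.
Qed.

Definition measure (A : finType) (E : A -> A -> int) : nat :=
  \sum_(u : A) \sum_(v : A) absz (E u v).

Lemma measure_ge (A : finType) (E : A -> A -> int) a b : absz (E a b) <= measure E.
Proof.
rewrite /measure (bigD1 a) //= (bigD1 b) //=.
by rewrite -addnA leq_addr.
Qed.

Lemma dlt_skew (A : finType) (a b u v : A) : dlt a b u v = (- dlt a b v u)%R.
Proof. by rewrite /dlt opprB; congr (Posz (nat_of_bool _) - Posz (nat_of_bool _))%R; rewrite andbC. Qed.

Lemma dlt_cases (A : finType) (a b u v : A) : a != b ->
  [\/ [/\ u = a, v = b & dlt a b u v = 1%R], [/\ u = b, v = a & dlt a b u v = (-1)%R]
    | dlt a b u v = 0%R].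
Proof.
move=> ab; have ba : b != a by rewrite eq_sym.
rewrite /dlt.
have [->|ua] := eqVneq u a.
  have [->|vb] := eqVneq v b.
    by apply: Or31; split => //; rewrite ?eqxx ?(negbTE ab) ?(negbTE ba).
  by apply: Or33; rewrite ?eqxx ?(negbTE ab) ?(negbTE ba) ?(negbTE vb) ?andbF.
have [->|ub] := eqVneq u b.
  have [->|va] := eqVneq v a.
    by apply: Or32; split => //; rewrite ?eqxx ?(negbTE ab) ?(negbTE ba).
  by apply: Or33; rewrite ?eqxx ?(negbTE ba) ?(negbTE va) ?andbF.
by apply: Or33.
Qed.

Lemma measure_dec (A : finType) (E : A -> A -> int) a b :
  a != b -> (0 < E a b)%R -> E b a = (- E a b)%R ->
  measure (fun u v => E u v - dlt a b u v)%R < measure E.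
Proof.
move=> ab hp hs.
have H : forall u v, absz (E u v - dlt a b u v)%R <= absz (E u v).
  move=> u v; case: (dlt_cases u v ab) => [[-> -> ->]|[-> -> ->]|->]; lia.
rewrite /measure (bigD1 a) //= [X in _ < X](bigD1 a) //=.
rewrite (bigD1 b) //= [X in _ < X + _](bigD1 b) //=.
have h1 : absz (E a b - dlt a b a b)%R < absz (E a b).
  have d1 : dlt a b a b = 1%R by rewrite /dlt !eqxx (negbTE ab).
  by rewrite d1; lia.
have h2 : \sum_(i | i != b) absz (E a i - dlt a b a i)%R <= \sum_(i | i != b) absz (E a i).
  by apply: leq_sum => i _; apply: H.
have h3 : \sum_(i | i != a) \sum_v absz (E i v - dlt a b i v)%R <= \sum_(i | i != a) \sum_v absz (E i v).
  by apply: leq_sum => i _; apply: leq_sum => j _; apply: H.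
lia.
Qed.

Lemma reach (A : finType) (f : profile A -> {set A}) (x : A) :
  pairwise_SCC f -> strategyproof f ->
  forall n (E : A -> A -> int), measure E <= n -> (forall u v, E u v = - E v u)%R ->
  (forall w, 0 <= E x w)%R ->
  forall P, valid_profile P -> f P = [set x] ->
  exists P', [/\ valid_profile P', f P' = [set x] &
    forall u v, margin P' u v = (margin P u v + 2%:Z * E u v)%R].
Proof.
move=> hpw hsp; elim=> [|n IH] E hm hs hx P hP hf.
  exists P; split => // u v.
  have := measure_ge E u v; rewrite leqn0 in hm; rewrite (eqP hm) leqn0 absz_eq0 => /eqP ->.
  by rewrite mulr0 addr0.
case: (boolP [forall u, forall v, E u v == 0%R]) => [/forallP H|].
  exists P; split => // u v.
  by have /forallP/(_ v)/eqP -> := H u; rewrite mulr0 addr0.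
rewrite negb_forall => /existsP[u]; rewrite negb_forall => /existsP[v] huv.
have [a [b hab]] : exists a b, (0 < E a b)%R.
  case: (ltrgtP (E u v) 0%R) => h.
  - by exists v, u; rewrite hs; lia.
  - by exists u, v.
  - by rewrite h eqxx in huv.
have ab : a != b.
  by apply/eqP => E'; subst b; move: (hs a a) hab; lia.
have bx : b != x.
  by apply/eqP => E'; subst b; move: (hs a x) (hx a) hab; lia.
have [P1 [v1 f1 m1]] := step hpw hsp ab bx hP hf.
set E' := fun u v => (E u v - dlt a b u v)%R.
have hm' : measure E' <= n.
  have := measure_dec ab hab (hs b a); rewrite /E'; lia.
have hs' : forall u v, E' u v = (- E' v u)%R.
  by move=> u' v'; rewrite /E' hs (dlt_skew a b u' v'); lia.
have hx' : forall w, (0 <= E' x w)%R.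
  move=> w; rewrite /E'; have := hx w.
  by case: (dlt_cases x w ab) => [[-> -> ->]|[ebx _ ->]|->]; lia.
have [P' [vP' f' m']] := IH E' hm' hs' hx' P1 v1 f1.
exists P'; split => // u' v'.
by rewrite m' m1 /E'; lia.
Qed.

Lemma contrib_lt (A : finType) (a b t u v : A) :
  rk a b t u < rk a b t v -> contrib (rrel a b t) u v = 1%R.
Proof. by move=> h; rewrite /contrib /rrel h ltnNge (ltnW h). Qed.

Lemma margin_skew (A : finType) (R : profile A) u v : margin R u v = (- margin R v u)%R.
Proof. by rewrite /margin opprB. Qed.

Lemma margin_bound (A : finType) (R : profile A) u v :
  (margin R u v <= (size (voters R))%:Z)%R /\ (- (size (voters R))%:Z <= margin R u v)%R.
Proof.
rewrite /margin; have h1 := count_size (fun i => pref R i u v) (voters R).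
have h2 := count_size (fun i => pref R i v u) (voters R); lia.
Qed.

Lemma set_pair_neq (A : finType) (x y : A) : x != y -> [set x; y] != [set x].
Proof.
move=> xy; apply/eqP => E; have := set22 x y; rewrite E in_set1 => /eqP E'.
by rewrite E' eqxx in xy.
Qed.

Lemma boost (A : finType) (f : profile A -> {set A}) (x y : A) :
  pairwise_SCC f -> strategyproof f -> x != y ->
  forall Q, valid_profile Q -> f Q = [set x; y] ->
  exists Q1, [/\ valid_profile Q1, f Q1 = [set x; y] &
    forall u v, margin Q1 u v = (margin Q u v + contrib (rrel x y x) u v + contrib (rrel y x x) u v)%R].
Proof.
move=> hpw hsp xy Q hQ hf.
have yx : y != x by rewrite eq_sym.
set P0 := ext Q (rrel x y x) (oprel (rrel x y x)).
set P1 := ext Q (rrel x y x) (rrel y x x).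
have v0 : valid_profile P0 by apply: valid_ext => //; [apply: sto_rrel|apply: sto_op; apply: sto_rrel].
have v1 : valid_profile P1 by apply: valid_ext => //; apply: sto_rrel.
have f0 : f P0 = [set x; y].
  rewrite -hf; apply: hpw => // u v.
  by rewrite margin_ext contrib_op; lia.
exists P1; split => //; last by move=> u v; rewrite margin_ext.
apply/eqP; apply/negPn/negP => hne.
have Hin0 : (maxv Q).+2 \in voters P0 by rewrite /= mem_cat !inE eqxx !orbT.
have Hin1 : (maxv Q).+2 \in voters P1 by rewrite /= mem_cat !inE eqxx !orbT.
have Hj : forall j, j != (maxv Q).+2 -> pref P1 j = pref P0 j.
  by move=> j hj /=; case: ifP => //; rewrite (negbTE hj).
have Hj' : forall j, j != (maxv Q).+2 -> pref P0 j = pref P1 j.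
  by move=> j hj; rewrite Hj.
set Y := f P1 in hne *.
case: (boolP ((y \in Y) && (x \notin Y))) => [/andP[yY xY]|H].
- apply: (hsp P0 P1 (maxv Q).+2 v0 v1 erefl Hin0 Hj).
  rewrite f0; have -> : pref P0 (maxv Q).+2 = oprel (rrel x y x) by rewrite /= gtn_eqF // eqxx.
  split => //.
  + move=> u v; rewrite in_setD !inE negb_or => /andP[/andP[ux uy] _] /orP[]/eqP->;
    rewrite /oprel /rrel ?rkA ?rkB //; [exact: rk_pos | exact: rk_ge2].
  + move=> u v uY; rewrite in_setD !inE => /andP[vY /orP[]/eqP E]; subst v; last by rewrite yY in vY.
    rewrite /oprel /rrel rkA; apply: rk_pos.
    by apply: contraNneq xY => <-.
- apply: (hsp P1 P0 (maxv Q).+2 v1 v0 erefl Hin1 Hj').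
  rewrite f0; have -> : pref P1 (maxv Q).+2 = rrel y x x by rewrite /= gtn_eqF // eqxx.
  split; first by rewrite eq_sym.
  + move=> u v; rewrite in_setD !inE => /andP[uY /orP[]/eqP E] vY; subst u.
    * rewrite /rrel rkB //; apply: rk_ge2.
        by apply: contraNneq H => E; subst v; rewrite vY uY.
      by apply: contraNneq uY => <-.
    * rewrite /rrel rkA; apply: rk_pos.
      by apply: contraNneq uY => <-.
  + move=> u v; rewrite !inE => /orP[]/eqP -> /andP[/norP[vx vy] _];
    rewrite /rrel ?rkA ?rkB //.
      by have := rk_ge2 x vy vx; lia.
    exact: rk_pos.
Qed.

Lemma boostk (A : finType) (f : profile A -> {set A}) (x y : A) :
  pairwise_SCC f -> strategyproof f -> x != y ->
  forall Q, valid_profile Q -> f Q = [set x; y] -> forall k,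
  exists Q1, [/\ valid_profile Q1, f Q1 = [set x; y], margin Q1 x y = margin Q x y &
    forall w, w != x -> w != y -> margin Q1 x w = (margin Q x w + (2 * k)%:Z)%R /\
                                  margin Q1 y w = (margin Q y w + (2 * k)%:Z)%R].
Proof.
move=> hpw hsp xy Q hQ hf; elim=> [|k [Q1 [v1 f1 m1 m1']]].
  by exists Q; split => // w _ _; rewrite !addr0.
have yx : y != x by rewrite eq_sym.
have [Q2 [v2 f2 m2]] := boost hpw hsp xy v1 f1.
exists Q2; split => //.
  rewrite m2 m1 contrib_lt ?rkA ?rkB // /contrib /rrel rkA rkB //=; lia.
move=> w wx wy; have [h1 h2] := m1' w wx wy.
rewrite !m2 h1 h2 !contrib_lt ?rkA ?rkB //; try lia.
all: try (apply: rk_ge2; done); apply: rk_pos => //.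
Qed.

Lemma margin_diag (A : finType) (R : profile A) u : margin R u u = 0%R.
Proof. by rewrite /margin subrr. Qed.

Lemma neq0_of (A : finType) (X : {set A}) x : x \in X -> X != set0.
Proof. by move=> h; apply/set0Pn; exists x. Qed.

Lemma cw_singleton (A : finType) (f : profile A -> {set A}) :
  pairwise_SCC f -> set_non_imposing f -> homogeneous f -> strategyproof f ->
  forall R, valid_profile R -> forall x, condorcet_winner R x -> f R = [set x].
Proof.
move=> hpw hni hhom hsp R vR x hcw.
have [R0 [v0 f0]] := hni [set x] (neq0_of (set11 x)).
set K := size (voters R0).
have K0 : 0 < K by case: v0 => _; rewrite /K; case: (voters R0).
have vP := valid_copies v0 (isT : 0 < 2).
have fP : f (copies 2 R0) = [set x] by rewrite hhom.
set E := fun u v => (K%:Z * margin R u v - margin R0 u v)%R.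
have hs : forall u v, E u v = (- E v u)%R.
  by move=> u v; rewrite /E (margin_skew R u v) (margin_skew R0 u v); lia.
have hx : forall w, (0 <= E x w)%R.
  move=> w; rewrite /E; have [->|wx] := eqVneq w x; first by rewrite !margin_diag; lia.
  have h1 := hcw w wx; rewrite /majority_pref in h1.
  have [h2 _] := margin_bound R0 x w; rewrite -/K in h2.
  have h3 : (K%:Z <= K%:Z * margin R x w)%R.
    by rewrite -[X in (X <= _)%R]mulr1 ler_wpM2l //; lia.
  lia.
have [P' [vP' fP' mP']] := reach hpw hsp (leqnn (measure E)) hs hx vP fP.
have K2 : 0 < 2 * K by rewrite muln_gt0 K0.
have vC := valid_copies vR K2.
rewrite -(hhom R (2 * K) vR K2) -fP'; apply: hpw => // u v.
rewrite mP' !margin_copies // /E PoszM; lia.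
Qed.

Lemma singleton_cw (A : finType) (f : profile A -> {set A}) :
  pairwise_SCC f -> set_non_imposing f -> homogeneous f -> strategyproof f ->
  forall R, valid_profile R -> forall x, f R = [set x] -> condorcet_winner R x.
Proof.
move=> hpw hni hhom hsp R vR x hf y yx; rewrite /majority_pref.
have xy : x != y by rewrite eq_sym.
case: (ltrP 0%R (margin R x y)) => // hle; exfalso.
have [Q0 [vQ0 fQ0]] := hni [set x; y] (neq0_of (set21 x y)).
set k := size (voters Q0) + size (voters R) + 1.
have [Q1 [vQ1 fQ1 mxy mw]] := boostk hpw hsp xy vQ0 fQ0 k.
have bnd : forall w, w != x -> w != y ->
    (0 < margin Q1 x w)%R /\ (0 < margin Q1 y w)%R /\ (margin R x w <= margin Q1 x w)%R.
  move=> w wx wy; have [h1 h2] := mw w wx wy.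
  have [a1 a2] := margin_bound Q0 x w; have [b1 b2] := margin_bound Q0 y w.
  have [c1 c2] := margin_bound R x w.
  rewrite h1 h2 /k; lia.
case: (ltrgtP (margin Q0 x y) 0%R) => hq.
-
  have : f Q1 = [set y].
    apply: (cw_singleton hpw hni hhom hsp vQ1) => w wy; rewrite /majority_pref.
    have [->|wx] := eqVneq w x; first by rewrite margin_skew mxy; lia.
    by have [_ [h _]] := bnd w wx wy.
  rewrite fQ1 => E; have := set21 x y; rewrite E in_set1 => /eqP E'.
  by rewrite E' eqxx in xy.
- have : f Q1 = [set x].
    apply: (cw_singleton hpw hni hhom hsp vQ1) => w wx; rewrite /majority_pref.
    have [->|wy] := eqVneq w y; first by rewrite mxy.
    by have [h _] := bnd w wx wy.
  by rewrite fQ1; apply/eqP; apply: set_pair_neq.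
- have vP := valid_copies vR (isT : 0 < 2).
  have fP : f (copies 2 R) = [set x] by rewrite hhom.
  set E := fun u v => (margin Q1 u v - margin R u v)%R.
  have hs : forall u v, E u v = (- E v u)%R.
    by move=> u v; rewrite /E (margin_skew R u v) (margin_skew Q1 u v); lia.
  have hx : forall w, (0 <= E x w)%R.
    move=> w; rewrite /E; have [->|wx] := eqVneq w x; first by rewrite !margin_diag; lia.
    have [->|wy] := eqVneq w y; first by rewrite mxy hq; lia.
    by have [_ [_ h]] := bnd w wx wy; lia.
  have [P' [vP' fP' mP']] := reach hpw hsp (leqnn (measure E)) hs hx vP fP.
  have vQ2 := valid_copies vQ1 (isT : 0 < 2).
  have : f P' = f (copies 2 Q1).
    apply: hpw => // u v; rewrite mP' !margin_copies // /E; lia.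
  rewrite fP' hhom // fQ1 => E'; have := set_pair_neq xy; by rewrite -E' eqxx.
Qed.

Unset Implicit Arguments.

Theorem lemma13 (A : finType) (f : profile A -> {set A}) :
  is_SCC f -> pairwise_SCC f -> set_non_imposing f -> homogeneous f ->
  strategyproof f -> strongly_condorcet_consistent f.
Proof.
move=> _ hpw hni hhom hsp R vR x; split.
- exact: singleton_cw.
- exact: cw_singleton.
Qed.
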